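(* Consider the following chemical reaction network (the ERK cascade with three phosphatases and no feedback) with 22 species RAF, pRAF, MEK, pMEK, ppMEK, ERK, pERK, ppERK, RAS, RAFPH, MEKPH, ERKPH, RAS-RAF, MEK-pRAF, pMEK-pRAF, ERK-ppMEK, pERK-ppMEK, RAF-RAFPH, ppMEK-MEKPH, pMEK-MEKPH, ppERK-ERKPH, pERK-ERKPH (each a separate species; names with a hyphen denote complexes formed by binding) and 30 reactions with rate constants $k_1,\dots,k_{30}$: RAF + RAS $\underset{k_2}{\overset{k_1}{\rightleftarrows}}$ RAS-RAF $\overset{k_3}{\to}$ pRAF + RAS; pRAF + RAFPH $\underset{k_5}{\overset{k_4}{\rightleftarrows}}$ RAF-RAFPH $\overset{k_6}{\to}$ RAF + RAFPH; MEK + pRAF $\underset{k_8}{\overset{k_7}{\rightleftarrows}}$ MEK-pRAF $\overset{k_9}{\to}$ pMEK + pRAF $\underset{k_{11}}{\overset{k_{10}}{\rightleftarrows}}$ pMEK-pRAF $\overset{k_{12}}{\to}$ ppMEK + pRAF; ppMEK + MEKPH $\underset{k_{14}}{\overset{k_{13}}{\rightleftarrows}}$ ppMEK-MEKPH $\overset{k_{15}}{\to}$ pMEK + MEKPH $\underset{k_{17}}{\overset{k_{16}}{\rightleftarrows}}$ pMEK-MEKPH $\overset{k_{18}}{\to}$ MEK + MEKPH; ERK + ppMEK $\underset{k_{20}}{\overset{k_{19}}{\rightleftarrows}}$ ERK-ppMEK $\overset{k_{21}}{\to}$ pERK + ppMEK $\underset{k_{23}}{\overset{k_{22}}{\rightleftarrows}}$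 pERK-ppMEK $\overset{k_{24}}{\to}$ ppERK + ppMEK; ppERK + ERKPH $\underset{k_{26}}{\overset{k_{25}}{\rightleftarrows}}$ ppERK-ERKPH $\overset{k_{27}}{\to}$ pERK + ERKPH $\underset{k_{29}}{\overset{k_{28}}{\rightleftarrows}}$ pERK-ERKPH $\overset{k_{30}}{\to}$ ERK + ERKPH. Then for every choice of positive rate constants $k\in\mathbb{R}^{30}_{>0}$, the associated mass-action system has toric steady states; in particular its steady state ideal is a binomial ideal.
   Context: For a reaction network with species concentrations $x=(x_1,\dots,x_s)$ and reactions $y\to y'$ (complexes $y,y'\in\mathbb{Z}_{\ge0}^s$, where a complex is a formal sum of species) with positive rate constants, the mass-action system is $\dot x = f(x;k)=\sum_{\text{reactions } y\to y'} k_{y\to y'}\, x^{y}(y'-y)$, whose components $f_1,\dots,f_s$ are polynomials in $x$. The steady state ideal is $J=\langle f_1,\dots,f_s\rangle\subseteq\mathbb{R}[x_1,\dots,x_s]$. The system has toric steady states if $J$ can be generated by binomials (polynomials with at most two terms) and $J$ admits nonnegative zeros. *)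

(* Defs.v *)
From HB Require Import structures.
From mathcomp Require Import all_boot all_order all_algebra.
From mathcomp Require Import reals.
From mathcomp Require Import mpoly.

Set Implicit Arguments.
Unset Strict Implicit.
Unset Printing Implicit Defensive.

Import Order.TTheory GRing.Theory Num.Theory.
Local Open Scope ring_scope.

(* A complex is a formal sum of species, given as the list of its species
   (with repetition); species are indexed by 'I_s. *)
Definition complex (s : nat) := seq 'I_s.

Definition reaction (s : nat) := (complex s * complex s)%type.

Definition cmono (R : ringType) (s : nat) (y : complex s) : {mpoly R[s]} :=
  \prod_(i <- y) 'X_i.

Definition stoich (s : nat) (r : reaction s) (j : 'I_s) : int :=
  (count_mem j r.2)%:Z - (count_mem j r.1)%:Z.

Definition mass_action (R : ringType) (s m : nat) (net : 'I_m -> reaction s)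
    (k : 'I_m -> R) (j : 'I_s) : {mpoly R[s]} :=
  \sum_(r < m) (k r)%:MP * cmono R (net r).1 * ((stoich (net r) j)%:~R)%:MP.

Definition in_ideal (R : ringType) (s : nat) (G : seq {mpoly R[s]})
    (p : {mpoly R[s]}) : Prop :=
  exists c : 'I_(size G) -> {mpoly R[s]},
    p = \sum_(i < size G) c i * G`_i.

Definition binomial (R : ringType) (s : nat) (p : {mpoly R[s]}) : bool :=
  (size (msupp p) <= 2)%N.

Definition binomial_ideal (R : ringType) (s : nat) (F : seq {mpoly R[s]}) :
    Prop :=
  exists B : seq {mpoly R[s]},
    all (@binomial R s) B /\ forall p, in_ideal B p <-> in_ideal F p.

Definition admits_nonneg_zero (R : realDomainType) (s : nat)
    (F : seq {mpoly R[s]}) : Prop :=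
  exists x : 'I_s -> R, (forall i, 0 <= x i) /\
    forall p, in_ideal F p -> p.@[x] = 0.

Definition steady_state_gens (R : ringType) (s m : nat)
    (net : 'I_m -> reaction s) (k : 'I_m -> R) : seq {mpoly R[s]} :=
  [seq mass_action net k j | j <- enum 'I_s].

Definition has_toric_steady_states (R : realDomainType) (s m : nat)
    (net : 'I_m -> reaction s) (k : 'I_m -> R) : Prop :=
  binomial_ideal (steady_state_gens net k) /\
  admits_nonneg_zero (steady_state_gens net k).

Definition sp (i : nat) : 'I_22 := inord i.

Definition RAF := sp 0.   Definition pRAF := sp 1.   Definition MEK := sp 2.
Definition pMEK := sp 3.  Definition ppMEK := sp 4.  Definition ERK := sp 5.
Definition pERK := sp 6.  Definition ppERK := sp 7.  Definition RAS := sp 8.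
Definition RAFPH := sp 9. Definition MEKPH := sp 10. Definition ERKPH := sp 11.
Definition RAS_RAF := sp 12.     Definition MEK_pRAF := sp 13.
Definition pMEK_pRAF := sp 14.   Definition ERK_ppMEK := sp 15.
Definition pERK_ppMEK := sp 16.  Definition RAF_RAFPH := sp 17.
Definition ppMEK_MEKPH := sp 18. Definition pMEK_MEKPH := sp 19.
Definition ppERK_ERKPH := sp 20. Definition pERK_ERKPH := sp 21.

(* Reactions listed in order of rate constants k_1, ..., k_30
   (index r : 'I_30 corresponds to k_{r+1}). *)
Definition erk_list : seq (reaction 22) :=
  [:: ([:: RAF; RAS], [:: RAS_RAF]);
      ([:: RAS_RAF], [:: RAF; RAS]);
      ([:: RAS_RAF], [:: pRAF; RAS]);
      ([:: pRAF; RAFPH], [:: RAF_RAFPH]);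
      ([:: RAF_RAFPH], [:: pRAF; RAFPH]);
      ([:: RAF_RAFPH], [:: RAF; RAFPH]);
      ([:: MEK; pRAF], [:: MEK_pRAF]);
      ([:: MEK_pRAF], [:: MEK; pRAF]);
      ([:: MEK_pRAF], [:: pMEK; pRAF]);
      ([:: pMEK; pRAF], [:: pMEK_pRAF]);
      ([:: pMEK_pRAF], [:: pMEK; pRAF]);
      ([:: pMEK_pRAF], [:: ppMEK; pRAF]);
      ([:: ppMEK; MEKPH], [:: ppMEK_MEKPH]);
      ([:: ppMEK_MEKPH], [:: ppMEK; MEKPH]);
      ([:: ppMEK_MEKPH], [:: pMEK; MEKPH]);
      ([:: pMEK; MEKPH], [:: pMEK_MEKPH]);
      ([:: pMEK_MEKPH], [:: pMEK; MEKPH]);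
      ([:: pMEK_MEKPH], [:: MEK; MEKPH]);
      ([:: ERK; ppMEK], [:: ERK_ppMEK]);
      ([:: ERK_ppMEK], [:: ERK; ppMEK]);
      ([:: ERK_ppMEK], [:: pERK; ppMEK]);
      ([:: pERK; ppMEK], [:: pERK_ppMEK]);
      ([:: pERK_ppMEK], [:: pERK; ppMEK]);
      ([:: pERK_ppMEK], [:: ppERK; ppMEK]);
      ([:: ppERK; ERKPH], [:: ppERK_ERKPH]);
      ([:: ppERK_ERKPH], [:: ppERK; ERKPH]);
      ([:: ppERK_ERKPH], [:: pERK; ERKPH]);
      ([:: pERK; ERKPH], [:: pERK_ERKPH]);
      ([:: pERK_ERKPH], [:: pERK; ERKPH]);
      ([:: pERK_ERKPH], [:: ERK; ERKPH])
  ].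

Definition erk_net (r : 'I_30) : reaction 22 := nth ([::], [::]) erk_list r.

(* Main.v *)
Require Import Defs.
From HB Require Import structures.
From mathcomp Require Import all_boot all_order all_algebra.
From mathcomp Require Import reals.
From mathcomp Require Import mpoly.
From mathcomp Require Import ring.
Import Order.TTheory GRing.Theory Num.Theory.
Local Open Scope ring_scope.
Set Warnings "-all".

Lemma in_ideal_nth (R : realType) (n : nat) (G : seq {mpoly R[n]}) i :
  (i < size G)%N -> in_ideal G G`_i.
Proof.
move=> hi; exists (fun j : 'I_(size G) => if nat_of_ord j == i then 1 else 0).
rewrite (bigD1 (Ordinal hi)) //= eqxx mul1r big1 ?addr0 // => j hj.
case: eqP => [e|]; last by rewrite mul0r.
by move: hj; rewrite (_ : j = Ordinal hi) ?eqxx //; apply: val_inj.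
Qed.

Lemma in_ideal0 (R : realType) (n : nat) (G : seq {mpoly R[n]}) : in_ideal G 0.
Proof. by exists (fun=> 0); rewrite big1 // => j _; rewrite mul0r. Qed.

Lemma in_idealD (R : realType) (n : nat) (G : seq {mpoly R[n]}) p q :
  in_ideal G p -> in_ideal G q -> in_ideal G (p + q).
Proof.
move=> [c ->] [d ->]; exists (fun j => c j + d j).
by rewrite -big_split /=; apply: eq_bigr => j _; rewrite mulrDl.
Qed.

Lemma in_idealM (R : realType) (n : nat) (G : seq {mpoly R[n]}) r p :
  in_ideal G p -> in_ideal G (r * p).
Proof.
move=> [c ->]; exists (fun j => r * c j).
by rewrite mulr_sumr; apply: eq_bigr => j _; rewrite mulrA.
Qed.

Lemma in_idealN (R : realType) (n : nat) (G : seq {mpoly R[n]}) p :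
  in_ideal G p -> in_ideal G (- p).
Proof. by move=> h; rewrite -mulN1r; apply: in_idealM. Qed.

Lemma in_ideal_sub (R : realType) (n : nat) (G H : seq {mpoly R[n]}) p :
  (forall i, (i < size G)%N -> in_ideal H G`_i) -> in_ideal G p -> in_ideal H p.
Proof.
move=> hG [c ->]; apply: (big_ind (in_ideal H)).
- exact: in_ideal0.
- exact: in_idealD.
- by move=> j _; apply: in_idealM; apply: hG.
Qed.

Lemma bin2P (R : realType) (a b : R) (i j l : 'I_22) :
  Defs.binomial (a%:MP * ('X_i * 'X_j) - b%:MP * 'X_l).
Proof.
rewrite /Defs.binomial; apply: (leq_trans (@uniq_leq_size _ _ [:: (U_(i) + U_(j))%MM; U_(l)%MM] (msupp_uniq _) _)) => [|//].
move=> m /msuppB_le; rewrite mem_cat !mul_mpolyC -mpolyXD.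
by case/orP => /msuppZ_le; rewrite msuppX !inE => ->; rewrite ?orbT.
Qed.

Lemma bin1P (R : realType) (a b : R) (i l : 'I_22) :
  Defs.binomial (a%:MP * 'X_i - b%:MP * 'X_l).
Proof.
rewrite /Defs.binomial; apply: (leq_trans (@uniq_leq_size _ _ [:: U_(i)%MM; U_(l)%MM] (msupp_uniq _) _)) => [|//].
move=> m /msuppB_le; rewrite mem_cat !mul_mpolyC.
by case/orP => /msuppZ_le; rewrite msuppX !inE => ->; rewrite ?orbT.
Qed.

Definition erkN : seq (seq nat * seq nat) :=
  [:: ([:: 0; 8], [:: 12]); ([:: 12], [:: 0; 8]); ([:: 12], [:: 1; 8]);
      ([:: 1; 9], [:: 17]); ([:: 17], [:: 1; 9]); ([:: 17], [:: 0; 9]);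
      ([:: 2; 1], [:: 13]); ([:: 13], [:: 2; 1]); ([:: 13], [:: 3; 1]);
      ([:: 3; 1], [:: 14]); ([:: 14], [:: 3; 1]); ([:: 14], [:: 4; 1]);
      ([:: 4; 10], [:: 18]); ([:: 18], [:: 4; 10]); ([:: 18], [:: 3; 10]);
      ([:: 3; 10], [:: 19]); ([:: 19], [:: 3; 10]); ([:: 19], [:: 2; 10]);
      ([:: 5; 4], [:: 15]); ([:: 15], [:: 5; 4]); ([:: 15], [:: 6; 4]);
      ([:: 6; 4], [:: 16]); ([:: 16], [:: 6; 4]); ([:: 16], [:: 7; 4]);
      ([:: 7; 11], [:: 20]); ([:: 20], [:: 7; 11]); ([:: 20], [:: 6; 11]);
      ([:: 6; 11], [:: 21]); ([:: 21], [:: 6; 11]); ([:: 21], [:: 5; 11])]%N.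

Lemma erk_listE : erk_list = [seq (map sp p.1, map sp p.2) | p <- erkN].
Proof. by []. Qed.

Lemma spK i : (i < 22)%N -> nat_of_ord (sp i) = i.
Proof. by move=> h; rewrite /sp inordK. Qed.

Fixpoint cntn (j : nat) (l : seq nat) : nat :=
  match l with [::] => 0%N | a :: l' => if Nat.eqb a j then S (cntn j l') else cntn j l' end.

Lemma cntnE j l : cntn j l = count_mem j l.
Proof.
elim: l => [//|a l IH] /=; rewrite IH.
by case: (PeanoNat.Nat.eqb_spec a j) => [->|/eqP ne]; rewrite ?eqxx // (negbTE ne).
Qed.

Fixpoint zsub (a b : nat) : int :=
  match a, b with
  | 0%N, 0%N => 0 | S _, 0%N => Posz a | 0%N, S b' => Negz b' | S a', S b' => zsub a' b' end.

Lemma zsubE a b : zsub a b = a%:Z - b%:Z.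
Proof.
elim: a b => [|a IH] [|b] /=; rewrite ?subr0 ?sub0r ?NegzE //.
by rewrite IH -addn1 -(addn1 b) !PoszD opprD addrACA subrr addr0.
Qed.

Definition stN (p : seq nat * seq nat) (j : nat) : int :=
  zsub (cntn j p.2) (cntn j p.1).

Definition sc {R : realType} (z : int) : {mpoly R[22]} :=
  match z with Posz 0 => 0 | Posz 1 => 1 | Negz 0 => -1 | _ => (z%:~R)%:MP end.

Lemma scE (R : realType) z : @sc R z = (z%:~R)%:MP.
Proof.
case: z => [[|[|n]]|[|n]] //=.
by rewrite mulrN1z rmorphN rmorph1.
Qed.

Lemma erkN_ok : all (fun p => all (fun i => i < 22) (p.1 ++ p.2))%N erkN.
Proof. by []. Qed.

Lemma count_sp (l : seq nat) j : (j < 22)%N -> all (fun i => i < 22)%N l ->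
  count_mem (sp j) (map sp l) = count_mem j l.
Proof.
move=> hj hl; rewrite count_map; apply: eq_in_count => a ha /=.
have ha' : (a < 22)%N by move/allP: hl => /(_ a ha).
apply/eqP/eqP => [|->//]; move/(congr1 (@nat_of_ord 22)); rewrite !spK //.
Qed.

Arguments sp : simpl never.


Definition Xv {R : realType} (i : nat) : {mpoly R[22]} := 'X_(sp i).
Definition kc {R : realType} (k : 'I_30 -> R) (i : nat) : {mpoly R[22]} := (k (inord i))%:MP.
Arguments Xv : simpl never.
Arguments kc : simpl never.

Definition term {R : realType} (k : 'I_30 -> R) (j i : nat) : {mpoly R[22]} :=
  match stN (nth ([::], [::]) erkN i) j with
  | Posz 0 => 0
  | z => kc k i * \prod_(a <- (nth ([::], [::]) erkN i).1) Xv a * sc z end.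

Lemma termE {R : realType} (k : 'I_30 -> R) (j i : nat) : term k j i =
  kc k i * \prod_(a <- (nth ([::], [::]) erkN i).1) Xv a *
  sc (stN (nth ([::], [::]) erkN i) j).
Proof. by rewrite /term; case: (stN _ _) => [[|n]|n] //=; rewrite mulr0. Qed.

Lemma maE (R : realType) (k : 'I_30 -> R) j : (j < 22)%N ->
  mass_action erk_net k (sp j) = \sum_(i <- iota 0 30) term k j i.
Proof.
move=> hj; rewrite -[iota 0 30]/(index_iota 0 30) big_mkord.
apply: eq_bigr => r _.
rewrite termE /kc inord_val /erk_net erk_listE (nth_map ([::], [::])); last by rewrite ltn_ord.
have := all_nthP ([::],[::]) erkN_ok r (ltn_ord r).
set p := nth _ erkN r => /= hp.
rewrite all_cat in hp; case/andP: hp => h1 h2.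
rewrite scE /cmono big_map /stoich /stN zsubE !cntnE /= !count_sp //.
Qed.

Definition M {R : realType} (k : 'I_30 -> R) (j : nat) := mass_action erk_net k (sp j).

Lemma fE0 (R : realType) (k : 'I_30 -> R) : M k 0 = 0 - kc k 0 * (Xv 0 * Xv 8) + kc k 1 * Xv 12 + kc k 5 * Xv 17.
Proof. by rewrite /M maE //= !big_cons big_nil /term /= !big_cons !big_nil /=; ring. Qed.

Lemma fE1 (R : realType) (k : 'I_30 -> R) : M k 1 = kc k 2 * Xv 12 - kc k 3 * (Xv 1 * Xv 9) + kc k 4 * Xv 17 - kc k 6 * (Xv 2 * Xv 1) + kc k 7 * Xv 13 + kc k 8 * Xv 13 - kc k 9 * (Xv 3 * Xv 1) + kc k 10 * Xv 14 + kc k 11 * Xv 14.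
Proof. by rewrite /M maE //= !big_cons big_nil /term /= !big_cons !big_nil /=; ring. Qed.

Lemma fE2 (R : realType) (k : 'I_30 -> R) : M k 2 = 0 - kc k 6 * (Xv 2 * Xv 1) + kc k 7 * Xv 13 + kc k 17 * Xv 19.
Proof. by rewrite /M maE //= !big_cons big_nil /term /= !big_cons !big_nil /=; ring. Qed.

Lemma fE3 (R : realType) (k : 'I_30 -> R) : M k 3 = kc k 8 * Xv 13 - kc k 9 * (Xv 3 * Xv 1) + kc k 10 * Xv 14 + kc k 14 * Xv 18 - kc k 15 * (Xv 3 * Xv 10) + kc k 16 * Xv 19.
Proof. by rewrite /M maE //= !big_cons big_nil /term /= !big_cons !big_nil /=; ring. Qed.

Lemma fE4 (R : realType) (k : 'I_30 -> R) : M k 4 = kc k 11 * Xv 14 - kc k 12 * (Xv 4 * Xv 10) + kc k 13 * Xv 18 - kc k 18 * (Xv 5 * Xv 4) + kc k 19 * Xv 15 + kc k 20 * Xv 15 - kc k 21 * (Xv 6 * Xv 4) + kc k 22 * Xv 16 + kc k 23 * Xv 16.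
Proof. by rewrite /M maE //= !big_cons big_nil /term /= !big_cons !big_nil /=; ring. Qed.

Lemma fE5 (R : realType) (k : 'I_30 -> R) : M k 5 = 0 - kc k 18 * (Xv 5 * Xv 4) + kc k 19 * Xv 15 + kc k 29 * Xv 21.
Proof. by rewrite /M maE //= !big_cons big_nil /term /= !big_cons !big_nil /=; ring. Qed.

Lemma fE6 (R : realType) (k : 'I_30 -> R) : M k 6 = kc k 20 * Xv 15 - kc k 21 * (Xv 6 * Xv 4) + kc k 22 * Xv 16 + kc k 26 * Xv 20 - kc k 27 * (Xv 6 * Xv 11) + kc k 28 * Xv 21.
Proof. by rewrite /M maE //= !big_cons big_nil /term /= !big_cons !big_nil /=; ring. Qed.

Lemma fE7 (R : realType) (k : 'I_30 -> R) : M k 7 = kc k 23 * Xv 16 - kc k 24 * (Xv 7 * Xv 11) + kc k 25 * Xv 20.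
Proof. by rewrite /M maE //= !big_cons big_nil /term /= !big_cons !big_nil /=; ring. Qed.

Lemma fE8 (R : realType) (k : 'I_30 -> R) : M k 8 = 0 - kc k 0 * (Xv 0 * Xv 8) + kc k 1 * Xv 12 + kc k 2 * Xv 12.
Proof. by rewrite /M maE //= !big_cons big_nil /term /= !big_cons !big_nil /=; ring. Qed.

Lemma fE9 (R : realType) (k : 'I_30 -> R) : M k 9 = 0 - kc k 3 * (Xv 1 * Xv 9) + kc k 4 * Xv 17 + kc k 5 * Xv 17.
Proof. by rewrite /M maE //= !big_cons big_nil /term /= !big_cons !big_nil /=; ring. Qed.

Lemma fE10 (R : realType) (k : 'I_30 -> R) : M k 10 = 0 - kc k 12 * (Xv 4 * Xv 10) + kc k 13 * Xv 18 + kc k 14 * Xv 18 - kc k 15 * (Xv 3 * Xv 10) + kc k 16 * Xv 19 + kc k 17 * Xv 19.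
Proof. by rewrite /M maE //= !big_cons big_nil /term /= !big_cons !big_nil /=; ring. Qed.

Lemma fE11 (R : realType) (k : 'I_30 -> R) : M k 11 = 0 - kc k 24 * (Xv 7 * Xv 11) + kc k 25 * Xv 20 + kc k 26 * Xv 20 - kc k 27 * (Xv 6 * Xv 11) + kc k 28 * Xv 21 + kc k 29 * Xv 21.
Proof. by rewrite /M maE //= !big_cons big_nil /term /= !big_cons !big_nil /=; ring. Qed.

Lemma fE12 (R : realType) (k : 'I_30 -> R) : M k 12 = kc k 0 * (Xv 0 * Xv 8) - kc k 1 * Xv 12 - kc k 2 * Xv 12.
Proof. by rewrite /M maE //= !big_cons big_nil /term /= !big_cons !big_nil /=; ring. Qed.

Lemma fE13 (R : realType) (k : 'I_30 -> R) : M k 13 = kc k 6 * (Xv 2 * Xv 1) - kc k 7 * Xv 13 - kc k 8 * Xv 13.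
Proof. by rewrite /M maE //= !big_cons big_nil /term /= !big_cons !big_nil /=; ring. Qed.

Lemma fE14 (R : realType) (k : 'I_30 -> R) : M k 14 = kc k 9 * (Xv 3 * Xv 1) - kc k 10 * Xv 14 - kc k 11 * Xv 14.
Proof. by rewrite /M maE //= !big_cons big_nil /term /= !big_cons !big_nil /=; ring. Qed.

Lemma fE15 (R : realType) (k : 'I_30 -> R) : M k 15 = kc k 18 * (Xv 5 * Xv 4) - kc k 19 * Xv 15 - kc k 20 * Xv 15.
Proof. by rewrite /M maE //= !big_cons big_nil /term /= !big_cons !big_nil /=; ring. Qed.

Lemma fE16 (R : realType) (k : 'I_30 -> R) : M k 16 = kc k 21 * (Xv 6 * Xv 4) - kc k 22 * Xv 16 - kc k 23 * Xv 16.
Proof. by rewrite /M maE //= !big_cons big_nil /term /= !big_cons !big_nil /=; ring. Qed.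

Lemma fE17 (R : realType) (k : 'I_30 -> R) : M k 17 = kc k 3 * (Xv 1 * Xv 9) - kc k 4 * Xv 17 - kc k 5 * Xv 17.
Proof. by rewrite /M maE //= !big_cons big_nil /term /= !big_cons !big_nil /=; ring. Qed.

Lemma fE18 (R : realType) (k : 'I_30 -> R) : M k 18 = kc k 12 * (Xv 4 * Xv 10) - kc k 13 * Xv 18 - kc k 14 * Xv 18.
Proof. by rewrite /M maE //= !big_cons big_nil /term /= !big_cons !big_nil /=; ring. Qed.

Lemma fE19 (R : realType) (k : 'I_30 -> R) : M k 19 = kc k 15 * (Xv 3 * Xv 10) - kc k 16 * Xv 19 - kc k 17 * Xv 19.
Proof. by rewrite /M maE //= !big_cons big_nil /term /= !big_cons !big_nil /=; ring. Qed.

Lemma fE20 (R : realType) (k : 'I_30 -> R) : M k 20 = kc k 24 * (Xv 7 * Xv 11) - kc k 25 * Xv 20 - kc k 26 * Xv 20.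
Proof. by rewrite /M maE //= !big_cons big_nil /term /= !big_cons !big_nil /=; ring. Qed.

Lemma fE21 (R : realType) (k : 'I_30 -> R) : M k 21 = kc k 27 * (Xv 6 * Xv 11) - kc k 28 * Xv 21 - kc k 29 * Xv 21.
Proof. by rewrite /M maE //= !big_cons big_nil /term /= !big_cons !big_nil /=; ring. Qed.


Definition Bl {R : realType} (k : 'I_30 -> R) : seq {mpoly R[22]} :=
  [:: (k (inord 0))%:MP * ('X_(sp 0) * 'X_(sp 8)) - (k (inord 1) + k (inord 2))%:MP * 'X_(sp 12);
      (k (inord 3))%:MP * ('X_(sp 1) * 'X_(sp 9)) - (k (inord 4) + k (inord 5))%:MP * 'X_(sp 17);
      (k (inord 6))%:MP * ('X_(sp 2) * 'X_(sp 1)) - (k (inord 7) + k (inord 8))%:MP * 'X_(sp 13);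
      (k (inord 9))%:MP * ('X_(sp 3) * 'X_(sp 1)) - (k (inord 10) + k (inord 11))%:MP * 'X_(sp 14);
      (k (inord 12))%:MP * ('X_(sp 4) * 'X_(sp 10)) - (k (inord 13) + k (inord 14))%:MP * 'X_(sp 18);
      (k (inord 15))%:MP * ('X_(sp 3) * 'X_(sp 10)) - (k (inord 16) + k (inord 17))%:MP * 'X_(sp 19);
      (k (inord 18))%:MP * ('X_(sp 5) * 'X_(sp 4)) - (k (inord 19) + k (inord 20))%:MP * 'X_(sp 15);
      (k (inord 21))%:MP * ('X_(sp 6) * 'X_(sp 4)) - (k (inord 22) + k (inord 23))%:MP * 'X_(sp 16);
      (k (inord 24))%:MP * ('X_(sp 7) * 'X_(sp 11)) - (k (inord 25) + k (inord 26))%:MP * 'X_(sp 20);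
      (k (inord 27))%:MP * ('X_(sp 6) * 'X_(sp 11)) - (k (inord 28) + k (inord 29))%:MP * 'X_(sp 21);
      (k (inord 2))%:MP * 'X_(sp 12) - (k (inord 5))%:MP * 'X_(sp 17);
      (k (inord 8))%:MP * 'X_(sp 13) - (k (inord 17))%:MP * 'X_(sp 19);
      (k (inord 11))%:MP * 'X_(sp 14) - (k (inord 14))%:MP * 'X_(sp 18);
      (k (inord 20))%:MP * 'X_(sp 15) - (k (inord 29))%:MP * 'X_(sp 21);
      (k (inord 23))%:MP * 'X_(sp 16) - (k (inord 26))%:MP * 'X_(sp 20)].

Lemma FlE (R : realType) (k : 'I_30 -> R) i : (i < 22)%N ->
  (steady_state_gens erk_net k)`_i = M k i.
Proof.
move=> hi; rewrite /steady_state_gens (nth_map ord0) ?size_enum_ord //.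
rewrite /M; congr mass_action; apply: val_inj; rewrite /= nth_enum_ord //.
by rewrite spK.
Qed.

Lemma size_Fl (R : realType) (k : 'I_30 -> R) : size (steady_state_gens erk_net k) = 22.
Proof. by rewrite size_map size_enum_ord. Qed.

Lemma inF (R : realType) (k : 'I_30 -> R) j : (j < 22)%N ->
  in_ideal (steady_state_gens erk_net k) (M k j).
Proof. by move=> hj; rewrite -FlE //; apply: in_ideal_nth; rewrite size_Fl. Qed.

Lemma inB (R : realType) (k : 'I_30 -> R) j : (j < 15)%N ->
  in_ideal (Bl k) (Bl k)`_j.
Proof. by move=> hj; apply: in_ideal_nth. Qed.

Lemma rel_in (R : realType) (G : seq {mpoly R[22]}) p q :
  q = p -> in_ideal G p -> in_ideal G q.
Proof. by move=> ->. Qed.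

Ltac idl := repeat first [ (apply: inF; done) | (apply: inB; done)
                         | apply: in_idealD | apply: in_idealN ].

Lemma BinF (R : realType) (k : 'I_30 -> R) i : (i < 15)%N ->
  in_ideal (steady_state_gens erk_net k) (Bl k)`_i.
Proof.
case: i => [|[|[|[|[|[|[|[|[|[|[|[|[|[|[|//]]]]]]]]]]]]]]] _.
- apply: (@rel_in _ _ (M k 12)); [rewrite fE12 /= /Xv /kc; ring | idl].
- apply: (@rel_in _ _ (M k 17)); [rewrite fE17 /= /Xv /kc; ring | idl].
- apply: (@rel_in _ _ (M k 13)); [rewrite fE13 /= /Xv /kc; ring | idl].
- apply: (@rel_in _ _ (M k 14)); [rewrite fE14 /= /Xv /kc; ring | idl].
- apply: (@rel_in _ _ (M k 18)); [rewrite fE18 /= /Xv /kc; ring | idl].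
- apply: (@rel_in _ _ (M k 19)); [rewrite fE19 /= /Xv /kc; ring | idl].
- apply: (@rel_in _ _ (M k 15)); [rewrite fE15 /= /Xv /kc; ring | idl].
- apply: (@rel_in _ _ (M k 16)); [rewrite fE16 /= /Xv /kc; ring | idl].
- apply: (@rel_in _ _ (M k 20)); [rewrite fE20 /= /Xv /kc; ring | idl].
- apply: (@rel_in _ _ (M k 21)); [rewrite fE21 /= /Xv /kc; ring | idl].
- apply: (@rel_in _ _ (- M k 0 - M k 12)); [rewrite fE0 fE12 /= /Xv /kc; ring | idl].
- apply: (@rel_in _ _ (- M k 2 - M k 13)); [rewrite fE2 fE13 /= /Xv /kc; ring | idl].
- apply: (@rel_in _ _ (M k 4 + M k 18 + M k 15 + M k 16)); [rewrite fE4 fE18 fE15 fE16 /= /Xv /kc; ring | idl].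
- apply: (@rel_in _ _ (- M k 5 - M k 15)); [rewrite fE5 fE15 /= /Xv /kc; ring | idl].
- apply: (@rel_in _ _ (M k 7 + M k 20)); [rewrite fE7 fE20 /= /Xv /kc; ring | idl].
Qed.

Lemma FinB (R : realType) (k : 'I_30 -> R) i : (i < 22)%N ->
  in_ideal (Bl k) (M k i).
Proof.
set b := fun n => (Bl k)`_n.
case: i => [|[|[|[|[|[|[|[|[|[|[|[|[|[|[|[|[|[|[|[|[|[|//]]]]]]]]]]]]]]]]]]]]]] _.
- apply: (@rel_in _ _ (- b 0 - b 10)); [rewrite fE0 /b /= /Xv /kc; ring | idl].
- apply: (@rel_in _ _ (- b 1 - b 2 - b 3 + b 10)); [rewrite fE1 /b /= /Xv /kc; ring | idl].
- apply: (@rel_in _ _ (- b 2 - b 11)); [rewrite fE2 /b /= /Xv /kc; ring | idl].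
- apply: (@rel_in _ _ (- b 3 - b 5 + b 11 - b 12)); [rewrite fE3 /b /= /Xv /kc; ring | idl].
- apply: (@rel_in _ _ (b 12 - b 4 - b 6 - b 7)); [rewrite fE4 /b /= /Xv /kc; ring | idl].
- apply: (@rel_in _ _ (- b 6 - b 13)); [rewrite fE5 /b /= /Xv /kc; ring | idl].
- apply: (@rel_in _ _ (- b 7 - b 9 + b 13 - b 14)); [rewrite fE6 /b /= /Xv /kc; ring | idl].
- apply: (@rel_in _ _ (- b 8 + b 14)); [rewrite fE7 /b /= /Xv /kc; ring | idl].
- apply: (@rel_in _ _ (- b 0)); [rewrite fE8 /b /= /Xv /kc; ring | idl].
- apply: (@rel_in _ _ (- b 1)); [rewrite fE9 /b /= /Xv /kc; ring | idl].
- apply: (@rel_in _ _ (- b 4 - b 5)); [rewrite fE10 /b /= /Xv /kc; ring | idl].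
- apply: (@rel_in _ _ (- b 8 - b 9)); [rewrite fE11 /b /= /Xv /kc; ring | idl].
- apply: (@rel_in _ _ (b 0)); [rewrite fE12 /b /= /Xv /kc; ring | idl].
- apply: (@rel_in _ _ (b 2)); [rewrite fE13 /b /= /Xv /kc; ring | idl].
- apply: (@rel_in _ _ (b 3)); [rewrite fE14 /b /= /Xv /kc; ring | idl].
- apply: (@rel_in _ _ (b 6)); [rewrite fE15 /b /= /Xv /kc; ring | idl].
- apply: (@rel_in _ _ (b 7)); [rewrite fE16 /b /= /Xv /kc; ring | idl].
- apply: (@rel_in _ _ (b 1)); [rewrite fE17 /b /= /Xv /kc; ring | idl].
- apply: (@rel_in _ _ (b 4)); [rewrite fE18 /b /= /Xv /kc; ring | idl].
- apply: (@rel_in _ _ (b 5)); [rewrite fE19 /b /= /Xv /kc; ring | idl].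
- apply: (@rel_in _ _ (b 8)); [rewrite fE20 /b /= /Xv /kc; ring | idl].
- apply: (@rel_in _ _ (b 9)); [rewrite fE21 /b /= /Xv /kc; ring | idl].
Qed.

Lemma erkN_ne : all (fun p => 0 < size p.1)%N erkN.
Proof. by []. Qed.

Lemma ma0 (R : realType) (k : 'I_30 -> R) (j : 'I_22) :
  (mass_action erk_net k j).@[fun _ => (0 : R)] = 0.
Proof.
rewrite /mass_action rmorph_sum big1 // => r _.
have := all_nthP ([::],[::]) erkN_ne r (ltn_ord r).
rewrite !rmorphM /= /cmono rmorph_prod /erk_net erk_listE (nth_map ([::], [::])) ?ltn_ord //=.
case: (nth _ erkN r).1 => [//|a l] _.
by rewrite /= big_cons mevalXU mul0r mulr0 mul0r.
Qed.

Theorem mainTheorem1 (R : realType) (k : 'I_30 -> R) (hk : forall r, 0 < k r) :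
  has_toric_steady_states erk_net k.
Proof.
split.
  exists (Bl k); split.
    by rewrite /= !bin2P !bin1P.
  move=> p; split; apply: in_ideal_sub => i hi.
  - by apply: BinF.
  - rewrite size_Fl in hi; rewrite FlE //; exact: FinB.
exists (fun _ => 0); split => [i //|p [c ->]].
rewrite rmorph_sum big1 // => i _.
rewrite rmorphM /=.
have hi : (i < 22)%N by case: i => m /=; rewrite size_Fl.
by rewrite FlE // /M ma0 mulr0.
Qed.
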